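(* Let $(\mathcal H,\mathfrak A_0)$ be a Hilbert quasi *-algebra. A linear functional $\omega$ on $\mathcal H$ belongs to $\mathcal R_c(\mathcal H,\mathfrak A_0)$ if and only if there exists a unique w-positive bounded element $\eta\in\mathcal H$ such that $\omega(\xi)=\langle\xi,\eta\rangle$ for all $\xi\in\mathcal H$.
   Context: A Hilbert algebra is a *-algebra $\mathfrak A_0$ with an inner product $\langle\cdot,\cdot\rangle$ such that (i) for each $x$, $y\mapsto xy$ is continuous for the inner product norm; (ii) $\langle xy,z\rangle=\langle y,x^*z\rangle$ for all $x,y,z$; (iii) $\langle x,y\rangle=\langle y^*,x^*\rangle$ for all $x,y$; (iv) the linear span of $\{xy:x,y\in\mathfrak A_0\}$ is dense in $\mathfrak A_0$. Let $\mathcal H$ be the Hilbert space completion of $\mathfrak A_0$; the involution extends isometrically to $\mathcal H$, and the products $\xi x$, $x\xi$ for $\xi\in\mathcal H$, $x\in\mathfrak A_0$ are defined by continuity. It is assumed that (A): if $\xi\in\mathcal H$ and $\xi x=0$ for all $x\in\mathfrak A_0$ then $\xi=0$. With these operations $(\mathcal H,\mathfrak A_0)$ is a Banach quasi *-algebra (norm from the inner product), called a Hilbert quasi *-algebra. A linear functional $\omega$ on $\mathcal H$ is representable if (L.1) $\omega(x^*x)\ge0$ for all $x\in\mathfrak A_0$; (L.2) $\omega(y^*\xi^*x)=\overline{\omega(x^*\xi y)}$ for all $x,y\in\mathfrak A_0$, $\xi\in\mathcal H$; (L.3) for every $\xi\in\mathcal H$ there is $\gamma_\xi>0$ with $|\omega(\xi^*x)|\le\gamma_\xi\,\omega(x^*x)^{1/2}$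 for all $x\in\mathfrak A_0$. $\mathcal R_c(\mathcal H,\mathfrak A_0)$ is the set of norm-continuous representable functionals. For $\xi\in\mathcal H$, $L_\xi x=\xi x$ ($x\in\mathfrak A_0$); $\xi$ is bounded if $L_\xi$ is bounded on $\mathfrak A_0$ (equivalently $x\mapsto x\xi$ is bounded). $\xi$ is w-positive if $\langle\xi x,x\rangle\ge0$ for all $x\in\mathfrak A_0$. *)

(* Defs.v *)
From Stdlib Require Import Reals List.
Open Scope R_scope.

Record Cplx : Type := mkC { Re : R; Im : R }.
Definition C0 : Cplx := mkC 0 0.
Definition C1 : Cplx := mkC 1 0.
Definition RtoC (r : R) : Cplx := mkC r 0.
Definition Cadd (a b : Cplx) : Cplx := mkC (Re a + Re b) (Im a + Im b).
Definition Copp (a : Cplx) : Cplx := mkC (- Re a) (- Im a).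
Definition Cmul (a b : Cplx) : Cplx :=
  mkC (Re a * Re b - Im a * Im b) (Re a * Im b + Im a * Re b).
Definition Cconj (a : Cplx) : Cplx := mkC (Re a) (- Im a).
Definition Cabs (a : Cplx) : R := sqrt (Re a * Re a + Im a * Im a).

(* ---------- Hilbert quasi *-algebras ----------
   H is the Hilbert space (completion of A0), A0 is a predicate on H singling
   out the *-algebra A0 sitting densely in H.  [mul] is the multiplication:
   it is only meaningful when at least one factor lies in A0 (ξ x and x ξ);
   its values on pairs with no factor in A0 are irrelevant junk and are never
   constrained or used.  [star] is the involution on all of H. *)
Record HilbertQuasiStarAlgebra : Type := {
  H :> Type;
  hadd : H -> H -> H;
  hzero : H;
  hopp : H -> H;
  hscal : Cplx -> H -> H;
  inner : H -> H -> Cplx;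
  A0 : H -> Prop;
  mul : H -> H -> H;
  star : H -> H;

  hadd_assoc : forall u v w, hadd u (hadd v w) = hadd (hadd u v) w;
  hadd_comm : forall u v, hadd u v = hadd v u;
  hadd_zero : forall u, hadd u hzero = u;
  hadd_opp : forall u, hadd u (hopp u) = hzero;
  hscal_one : forall u, hscal C1 u = u;
  hscal_mul : forall a b u, hscal a (hscal b u) = hscal (Cmul a b) u;
  hscal_addv : forall a u v, hscal a (hadd u v) = hadd (hscal a u) (hscal a v);
  hscal_adds : forall a b u, hscal (Cadd a b) u = hadd (hscal a u) (hscal b u);

  inner_addl : forall u v w, inner (hadd u v) w = Cadd (inner u w) (inner v w);
  inner_scall : forall a u w, inner (hscal a u) w = Cmul a (inner u w);
  inner_conj : forall u v, inner u v = Cconj (inner v u);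
  inner_pos : forall u, 0 <= Re (inner u u);
  inner_def : forall u, inner u u = C0 -> u = hzero;

  complete : forall s : nat -> H,
    (forall eps, 0 < eps -> exists N, forall m n, (N <= m)%nat -> (N <= n)%nat ->
        sqrt (Re (inner (hadd (s m) (hopp (s n))) (hadd (s m) (hopp (s n))))) < eps) ->
    exists l, forall eps, 0 < eps -> exists N, forall n, (N <= n)%nat ->
        sqrt (Re (inner (hadd (s n) (hopp l)) (hadd (s n) (hopp l)))) < eps;

  A0_zero : A0 hzero;
  A0_add : forall x y, A0 x -> A0 y -> A0 (hadd x y);
  A0_scal : forall a x, A0 x -> A0 (hscal a x);
  A0_mul : forall x y, A0 x -> A0 y -> A0 (mul x y);
  A0_star : forall x, A0 x -> A0 (star x);
  A0_dense : forall xi eps, 0 < eps -> exists x, A0 x /\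
    sqrt (Re (inner (hadd xi (hopp x)) (hadd xi (hopp x)))) < eps;

  mul_assoc : forall x y z, A0 x -> A0 y -> A0 z -> mul x (mul y z) = mul (mul x y) z;
  star_mul : forall x y, A0 x -> A0 y -> star (mul x y) = mul (star y) (star x);

  (* products ξ x and x ξ (x in A0): linear in each variable and continuous in ξ
     (they are the continuous extensions of the product of A0) *)
  mul_addl : forall x xi1 xi2, A0 x -> mul (hadd xi1 xi2) x = hadd (mul xi1 x) (mul xi2 x);
  mul_scall : forall x a xi, A0 x -> mul (hscal a xi) x = hscal a (mul xi x);
  mul_addr : forall x xi1 xi2, A0 x -> mul x (hadd xi1 xi2) = hadd (mul x xi1) (mul x xi2);
  mul_scalr : forall x a xi, A0 x -> mul x (hscal a xi) = hscal a (mul x xi);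
  mul_addl_A0 : forall xi x y, A0 x -> A0 y -> mul xi (hadd x y) = hadd (mul xi x) (mul xi y);
  mul_scall_A0 : forall xi a x, A0 x -> mul xi (hscal a x) = hscal a (mul xi x);
  mul_addr_A0 : forall xi x y, A0 x -> A0 y -> mul (hadd x y) xi = hadd (mul x xi) (mul y xi);
  mul_scalr_A0 : forall xi a x, A0 x -> mul (hscal a x) xi = hscal a (mul x xi);
  mul_contl : forall x, A0 x -> exists M, forall xi,
    Re (inner (mul xi x) (mul xi x)) <= M * Re (inner xi xi);
  mul_contr : forall x, A0 x -> exists M, forall xi,
    Re (inner (mul x xi) (mul x xi)) <= M * Re (inner xi xi);

  star_add : forall u v, star (hadd u v) = hadd (star u) (star v);
  star_scal : forall a u, star (hscal a u) = hscal (Cconj a) (star u);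
  star_invol : forall u, star (star u) = u;
  star_isom : forall u, Re (inner (star u) (star u)) = Re (inner u u);

  hilb_ii : forall x y z, A0 x -> A0 y -> A0 z ->
    inner (mul x y) z = inner y (mul (star x) z);
  hilb_iii : forall x y, A0 x -> A0 y -> inner x y = inner (star y) (star x);
  hilb_iv : forall x eps, A0 x -> 0 < eps ->
    exists l : list (Cplx * H * H),
      (forall c a b, In (c, a, b) l -> A0 a /\ A0 b) /\
      let s := fold_right (fun t acc => match t with (c, a, b) =>
                  hadd (hscal c (mul a b)) acc end) hzero l in
      sqrt (Re (inner (hadd x (hopp s)) (hadd x (hopp s)))) < eps;

  (* assumption (A) *)
  cond_A : forall xi, (forall x, A0 x -> mul xi x = hzero) -> xi = hzero
}.

Section Notions.
Variable A : HilbertQuasiStarAlgebra.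

Definition hnorm (u : A) : R := sqrt (Re (inner A u u)).

Definition linear_functional (w : A -> Cplx) : Prop :=
  (forall u v, w (hadd A u v) = Cadd (w u) (w v)) /\
  (forall a u, w (hscal A a u) = Cmul a (w u)).

(* representable functionals: (L.1), (L.2), (L.3) *)
Definition representable (w : A -> Cplx) : Prop :=
  (forall x, A0 A x -> Im (w (mul A (star A x) x)) = 0 /\
                        0 <= Re (w (mul A (star A x) x))) /\
  (forall x y (xi : A), A0 A x -> A0 A y ->
     w (mul A (star A y) (mul A (star A xi) x)) =
     Cconj (w (mul A (star A x) (mul A xi y)))) /\
  (forall xi : A, exists g, 0 < g /\ forall x, A0 A x ->
     Cabs (w (mul A (star A xi) x)) <= g * sqrt (Re (w (mul A (star A x) x)))).

Definition norm_continuous (w : A -> Cplx) : Prop :=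
  exists M, forall u : A, Cabs (w u) <= M * hnorm u.

Definition Rc (w : A -> Cplx) : Prop := representable w /\ norm_continuous w.

Definition bounded_elt (xi : A) : Prop :=
  exists M, forall x, A0 A x -> hnorm (mul A xi x) <= M * hnorm x.

Definition w_positive (xi : A) : Prop :=
  forall x, A0 A x -> Im (inner A (mul A xi x) x) = 0 /\
                     0 <= Re (inner A (mul A xi x) x).
End Notions.

(* Main.v *)
Require Import Defs.
From Stdlib Require Import Reals List Lra Lia Psatz Classical ClassicalEpsilon ZArith.
Open Scope R_scope.

Lemma Cext (a b : Cplx) : Re a = Re b -> Im a = Im b -> a = b.
Proof. destruct a, b; simpl; intros; subst; reflexivity. Qed.

Ltac csimpl := unfold Cmul, Cadd, Copp, Cconj, C0, C1, RtoC in *; simpl in *.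
Ltac cring := apply Cext; csimpl; ring.

Notation "u +h v" := (hadd _ u v) (at level 50, left associativity).
Notation "a *h u" := (hscal _ a u) (at level 40).
Notation "<< u , v >>" := (inner _ u v).
Notation "u @ v" := (mul _ u v) (at level 30).
Notation "u ^*" := (star _ u) (at level 2).
Notation "0h" := (hzero _).
Notation m1 := (mkC (-1) 0).
Definition hsub {A : HilbertQuasiStarAlgebra} (u v : A) : A := hadd A u (hopp A v).
Notation Nm u := (Re (inner _ u u)).

Lemma hadd_0l {A : HilbertQuasiStarAlgebra} (u : A) : 0h +h u = u.
Proof. rewrite hadd_comm. apply hadd_zero. Qed.

Lemma hadd_cancel {A : HilbertQuasiStarAlgebra} (a b : A) : a = a +h b -> b = 0h.
Proof.
  intro E. transitivity (hopp A a +h a +h b).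
  - rewrite (hadd_comm A (hopp A a)), hadd_opp. symmetry. apply hadd_0l.
  - rewrite <- hadd_assoc, <- E, hadd_comm. apply hadd_opp.
Qed.

Lemma hscal_C0 {A : HilbertQuasiStarAlgebra} (u : A) : mkC 0 0 *h u = 0h.
Proof.
  apply (hadd_cancel (mkC 0 0 *h u)). rewrite <- hscal_adds. f_equal. cring.
Qed.

Lemma hopp_unique {A : HilbertQuasiStarAlgebra} (u v : A) : u +h v = 0h -> v = hopp A u.
Proof.
  intro E. transitivity (v +h (u +h hopp A u)).
  - rewrite hadd_opp, hadd_zero. reflexivity.
  - rewrite hadd_assoc, (hadd_comm A v u), E. apply hadd_0l.
Qed.

Lemma hopp_scal {A : HilbertQuasiStarAlgebra} (u : A) : hopp A u = m1 *h u.
Proof.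
  symmetry. apply hopp_unique. rewrite <- (hscal_one A u) at 1.
  rewrite <- hscal_adds. rewrite <- (hscal_C0 u). f_equal. cring.
Qed.

Lemma hsub_scal {A : HilbertQuasiStarAlgebra} (u v : A) : hsub u v = u +h m1 *h v.
Proof. unfold hsub. rewrite hopp_scal. reflexivity. Qed.

Lemma hzero_scal {A : HilbertQuasiStarAlgebra} : 0h = mkC 0 0 *h (0h : A).
Proof. symmetry. apply hscal_C0. Qed.

Lemma inner_addr {A : HilbertQuasiStarAlgebra} (u v w : A) :
  << u, v +h w >> = Cadd << u, v >> << u, w >>.
Proof.
  rewrite inner_conj, inner_addl, (inner_conj A v u), (inner_conj A w u).
  cring.
Qed.

Lemma inner_scalr {A : HilbertQuasiStarAlgebra} a (u v : A) :
  << u, a *h v >> = Cmul (Cconj a) << u, v >>.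
Proof.
  rewrite inner_conj, inner_scall, (inner_conj A v u). cring.
Qed.

Lemma inner_0l {A : HilbertQuasiStarAlgebra} (v : A) : << 0h, v >> = C0.
Proof. rewrite hzero_scal, inner_scall. cring. Qed.

Lemma inner_0r {A : HilbertQuasiStarAlgebra} (v : A) : << v, 0h >> = C0.
Proof. rewrite hzero_scal, inner_scalr. cring. Qed.

Lemma inner_Im {A : HilbertQuasiStarAlgebra} (u : A) : Im << u, u >> = 0.
Proof. pose proof (inner_conj A u u) as E. apply (f_equal Im) in E. csimpl. lra. Qed.

Lemma inner_Re_sym {A : HilbertQuasiStarAlgebra} (u v : A) : Re << u, v >> = Re << v, u >>.
Proof. rewrite inner_conj. reflexivity. Qed.

Lemma N_add {A : HilbertQuasiStarAlgebra} (u v : A) :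
  Nm (u +h v) = Nm u + Nm v + 2 * Re << u, v >>.
Proof.
  rewrite inner_addl, !inner_addr. csimpl. rewrite (inner_Re_sym v u). ring.
Qed.

Lemma N_scal {A : HilbertQuasiStarAlgebra} a (u : A) :
  Nm (a *h u) = (Re a * Re a + Im a * Im a) * Nm u.
Proof.
  rewrite inner_scall, inner_scalr. csimpl. rewrite (inner_Im u). ring.
Qed.

Lemma inner_ext {A : HilbertQuasiStarAlgebra} (a b : A) :
  (forall z, << a, z >> = << b, z >>) -> a = b.
Proof.
  intro E. assert (D : hsub a b = 0h).
  { apply inner_def. unfold hsub at 1. rewrite hopp_scal, inner_addl, inner_scall, E. cring. }
  unfold hsub in D. transitivity (a +h (hopp A b +h b)).
  - rewrite (hadd_comm A (hopp A b)), hadd_opp, hadd_zero. reflexivity.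
  - rewrite hadd_assoc, D. apply hadd_0l.
Qed.

Lemma Cabs_ge0 a : 0 <= Cabs a.
Proof. unfold Cabs. apply sqrt_pos. Qed.

Lemma Cabs_sq a : Cabs a * Cabs a = Re a * Re a + Im a * Im a.
Proof. unfold Cabs. apply sqrt_sqrt. nra. Qed.

Lemma Cabs_le_of_sq a x : 0 <= x -> Re a * Re a + Im a * Im a <= x * x -> Cabs a <= x.
Proof.
  intros Hx H. pose proof (Cabs_sq a). pose proof (Cabs_ge0 a). nra.
Qed.

Lemma Re_le_Cabs a : Rabs (Re a) <= Cabs a.
Proof.
  pose proof (Cabs_sq a). pose proof (Cabs_ge0 a).
  apply Rsqr_incr_0_var; [|assumption]. rewrite <- Rsqr_abs. unfold Rsqr. nra.
Qed.

Lemma Im_le_Cabs a : Rabs (Im a) <= Cabs a.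
Proof.
  pose proof (Cabs_sq a). pose proof (Cabs_ge0 a).
  apply Rsqr_incr_0_var; [|assumption]. rewrite <- Rsqr_abs. unfold Rsqr. nra.
Qed.

Lemma Re_le_Cabs' a : Re a <= Cabs a.
Proof. pose proof (Re_le_Cabs a). pose proof (Rle_abs (Re a)). lra. Qed.

Lemma Cabs_add a b : Cabs (Cadd a b) <= Cabs a + Cabs b.
Proof.
  apply Cabs_le_of_sq. pose proof (Cabs_ge0 a); pose proof (Cabs_ge0 b); lra.
  pose proof (Cabs_sq a) as Sa. pose proof (Cabs_sq b) as Sb.
  pose proof (Cabs_ge0 a); pose proof (Cabs_ge0 b).
  assert (Re a * Re b + Im a * Im b <= Cabs a * Cabs b).
  { assert (Hs : (Re a * Re b + Im a * Im b) * (Re a * Re b + Im a * Im b)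
            <= (Cabs a * Cabs b) * (Cabs a * Cabs b)).
    { replace ((Cabs a * Cabs b) * (Cabs a * Cabs b)) with
        ((Cabs a * Cabs a) * (Cabs b * Cabs b)) by ring.
      rewrite Sa, Sb. pose proof (Rle_0_sqr (Re a * Im b - Im a * Re b)). unfold Rsqr in *. nra. }
    apply Rsqr_incr_0_var; unfold Rsqr; nra. }
  csimpl. nra.
Qed.

Lemma Cabs_mul a b : Cabs (Cmul a b) = Cabs a * Cabs b.
Proof.
  unfold Cabs. rewrite <- sqrt_mult by nra. f_equal. csimpl. ring.
Qed.

Lemma Cabs_conj a : Cabs (Cconj a) = Cabs a.
Proof. unfold Cabs. csimpl. f_equal. ring. Qed.

Lemma Cabs_opp a : Cabs (Copp a) = Cabs a.
Proof. unfold Cabs. csimpl. f_equal. ring. Qed.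

Lemma Cabs_eq0 a : Cabs a = 0 -> a = C0.
Proof.
  intro H. pose proof (Cabs_sq a). rewrite H in H0.
  apply Cext; csimpl; nra.
Qed.

Lemma Cabs_small a : (forall e, 0 < e -> Cabs a < e) -> a = C0.
Proof.
  intro H. apply Cabs_eq0. pose proof (Cabs_ge0 a).
  destruct (Req_dec (Cabs a) 0); auto.
  specialize (H (Cabs a) ltac:(lra)). lra.
Qed.

Lemma Cabs_RtoC r : Cabs (mkC r 0) = Rabs r.
Proof. unfold Cabs. simpl. rewrite Rmult_0_l, Rplus_0_r. apply sqrt_Rsqr_abs. Qed.

Lemma quad_lemma a c d : 0 <= c -> 0 <= d ->
  (forall t, 0 <= a - 2 * t * c + t * t * c * d) -> c <= a * d.
Proof.
  intros Hc Hd H. destruct (Rle_lt_dec d 0).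
  - assert (d = 0) by lra. subst.
    destruct (Rle_lt_dec c 0). nra.
    specialize (H ((Rabs a + 1) / (2 * c))).
    assert (2 * ((Rabs a + 1) / (2 * c)) * c = Rabs a + 1) by (field; lra).
    pose proof (Rle_abs a). nra.
  - specialize (H (/ d)).
    assert (2 * / d * c = 2 * c / d) by (field; lra).
    assert (/ d * / d * c * d = c / d) by (field; lra).
    rewrite H0, H1 in H.
    assert (0 <= a - c / d) by lra.
    apply (Rmult_le_compat_r d) in H2; [|lra].
    replace ((a - c / d) * d) with (a * d - c) in H2 by (field; lra). lra.
Qed.

Lemma CS_gen {A : HilbertQuasiStarAlgebra} (B : A -> A -> Cplx) (D : A -> Prop) :
  (forall u v, D u -> D v -> D (u +h v)) ->
  (forall a u, D u -> D (a *h u)) ->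
  (forall u v w, D u -> D v -> D w -> B (u +h v) w = Cadd (B u w) (B v w)) ->
  (forall a u w, D u -> D w -> B (a *h u) w = Cmul a (B u w)) ->
  (forall u v, D u -> D v -> B u v = Cconj (B v u)) ->
  (forall u, D u -> 0 <= Re (B u u)) ->
  forall u v, D u -> D v ->
    Re (B u v) * Re (B u v) + Im (B u v) * Im (B u v) <= Re (B u u) * Re (B v v).
Proof.
  intros Dadd Dscal Badd Bscal Bherm Bpos u v Du Dv.
  set (b := B u v).
  apply quad_lemma; [nra| apply Bpos; auto |].
  intro t. set (l := mkC (- t * Re b) (- t * Im b)).
  assert (Dl : D (l *h v)) by auto.
  pose proof (Bpos (u +h l *h v) ltac:(auto)) as P.
  assert (Hbr : forall x y, D x -> D y -> B x (y) = Cconj (B y x)) by auto.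
  rewrite Badd in P by auto. rewrite Bscal in P by auto.
  rewrite (Hbr u (u +h l *h v)) in P by auto.
  rewrite (Hbr v (u +h l *h v)) in P by auto.
  rewrite !Badd in P by auto. rewrite !Bscal in P by auto.
  rewrite (Hbr v u) in P by auto. fold b in P.
  assert (Iu : Im (B u u) = 0).
  { pose proof (Bherm u u Du Du) as E. apply (f_equal Im) in E. csimpl. lra. }
  assert (Iv : Im (B v v) = 0).
  { pose proof (Bherm v v Dv Dv) as E. apply (f_equal Im) in E. csimpl. lra. }
  unfold l in P. csimpl. rewrite Iv in P. nra.
Qed.

Ltac veq := apply inner_ext; let z := fresh "z" in intro z; unfold hsub;
  rewrite ?hopp_scal; repeat (rewrite inner_addl || rewrite inner_scall || rewrite inner_0l); cring.

Lemma N_ge0 {A : HilbertQuasiStarAlgebra} (u : A) : 0 <= Nm u.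
Proof. apply inner_pos. Qed.

Lemma hnorm_ge0 {A : HilbertQuasiStarAlgebra} (u : A) : 0 <= hnorm A u.
Proof. apply sqrt_pos. Qed.

Lemma hnorm_sq {A : HilbertQuasiStarAlgebra} (u : A) : hnorm A u * hnorm A u = Nm u.
Proof. apply sqrt_sqrt, N_ge0. Qed.

Lemma CS_sq {A : HilbertQuasiStarAlgebra} (u v : A) :
  Re << u, v >> * Re << u, v >> + Im << u, v >> * Im << u, v >> <= Nm u * Nm v.
Proof.
  apply (CS_gen (inner A) (fun _ => True)); auto.
  - intros; apply inner_addl.
  - intros; apply inner_scall.
  - intros; apply inner_conj.
  - intros; apply inner_pos.
Qed.

Lemma CS {A : HilbertQuasiStarAlgebra} (u v : A) :
  Cabs << u, v >> <= hnorm A u * hnorm A v.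
Proof.
  apply Cabs_le_of_sq. pose proof (hnorm_ge0 u); pose proof (hnorm_ge0 v); nra.
  replace (hnorm A u * hnorm A v * (hnorm A u * hnorm A v)) with
    ((hnorm A u * hnorm A u) * (hnorm A v * hnorm A v)) by ring.
  rewrite !hnorm_sq. apply CS_sq.
Qed.

Lemma hnorm_le_of_sq {A : HilbertQuasiStarAlgebra} (u : A) x :
  0 <= x -> Nm u <= x * x -> hnorm A u <= x.
Proof. intros. pose proof (hnorm_sq u). pose proof (hnorm_ge0 u). nra. Qed.

Lemma hnorm_tri {A : HilbertQuasiStarAlgebra} (u v : A) :
  hnorm A (u +h v) <= hnorm A u + hnorm A v.
Proof.
  apply hnorm_le_of_sq. pose proof (hnorm_ge0 u); pose proof (hnorm_ge0 v); lra.
  rewrite N_add. pose proof (CS u v). pose proof (Re_le_Cabs' << u, v >>).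
  pose proof (hnorm_sq u); pose proof (hnorm_sq v). nra.
Qed.

Lemma hnorm_scal {A : HilbertQuasiStarAlgebra} a (u : A) :
  hnorm A (a *h u) = Cabs a * hnorm A u.
Proof.
  unfold hnorm, Cabs. rewrite N_scal. rewrite sqrt_mult; auto. nra. apply N_ge0.
Qed.

Lemma hnorm_opp {A : HilbertQuasiStarAlgebra} (u : A) : hnorm A (hopp A u) = hnorm A u.
Proof. rewrite hopp_scal, hnorm_scal. unfold Cabs. simpl.
  replace (-1 * -1 + 0 * 0) with 1 by ring. rewrite sqrt_1. ring. Qed.

Lemma hnorm_star {A : HilbertQuasiStarAlgebra} (u : A) : hnorm A (u^*) = hnorm A u.
Proof. unfold hnorm. rewrite star_isom. reflexivity. Qed.

Lemma hnorm_0 {A : HilbertQuasiStarAlgebra} : hnorm A 0h = 0.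
Proof. unfold hnorm. rewrite inner_0l. simpl. apply sqrt_0. Qed.

Lemma hnorm_eq0 {A : HilbertQuasiStarAlgebra} (u : A) : hnorm A u = 0 -> u = 0h.
Proof.
  intro H. apply inner_def. pose proof (hnorm_sq u). rewrite H in H0.
  apply Cext. simpl. lra. rewrite inner_Im. reflexivity.
Qed.

Lemma hsub_add {A : HilbertQuasiStarAlgebra} (u x : A) : hsub u x +h x = u.
Proof. veq. Qed.

Lemma hsub_sym {A : HilbertQuasiStarAlgebra} (u v : A) : hnorm A (hsub u v) = hnorm A (hsub v u).
Proof.
  replace (hsub v u) with (m1 *h hsub u v) by veq. rewrite hnorm_scal.
  unfold Cabs. simpl. replace (-1 * -1 + 0 * 0) with 1 by ring. rewrite sqrt_1. ring.
Qed.

Lemma hsub_tri {A : HilbertQuasiStarAlgebra} (u v w : A) :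
  hnorm A (hsub u w) <= hnorm A (hsub u v) + hnorm A (hsub v w).
Proof.
  replace (hsub u w) with (hsub u v +h hsub v w) by veq. apply hnorm_tri.
Qed.

Lemma hnorm_le_sub {A : HilbertQuasiStarAlgebra} (u x : A) :
  hnorm A x <= hnorm A u + hnorm A (hsub u x).
Proof.
  rewrite <- (hsub_add x u) at 1. rewrite hsub_sym. rewrite Rplus_comm. apply hnorm_tri.
Qed.

Lemma eps_le a b : (forall e, 0 < e -> a <= b + e) -> a <= b.
Proof.
  intro H. destruct (Rle_lt_dec a b); auto. specialize (H ((a - b)/2) ltac:(lra)). lra.
Qed.

Definition AddC {A : HilbertQuasiStarAlgebra} (f : A -> Cplx) :=
  forall u v, f (u +h v) = Cadd (f u) (f v).
Definition BddC {A : HilbertQuasiStarAlgebra} (f : A -> Cplx) :=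
  exists M, forall u, Cabs (f u) <= M * hnorm A u.
Definition Addv {A : HilbertQuasiStarAlgebra} (f : A -> A) :=
  forall u v, f (u +h v) = f u +h f v.
Definition Bddv {A : HilbertQuasiStarAlgebra} (f : A -> A) :=
  exists M, forall u, hnorm A (f u) <= M * hnorm A u.

Lemma dense_near {A : HilbertQuasiStarAlgebra} (u : A) e : 0 < e ->
  exists x, A0 A x /\ hnorm A (hsub u x) < e.
Proof. intro. apply (A0_dense A u e H). Qed.

Lemma ext_le {A : HilbertQuasiStarAlgebra} (f : A -> Cplx) K :
  AddC f -> BddC f -> 0 <= K -> (forall x, A0 A x -> Cabs (f x) <= K * hnorm A x) ->
  forall u, Cabs (f u) <= K * hnorm A u.
Proof.
  intros Ha [M HM] HK H u. apply eps_le. intros e He.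
  set (d := e / (Rabs M + K + 1)).
  assert (Hd : 0 < d). { unfold d. apply Rdiv_lt_0_compat; auto. pose proof (Rabs_pos M); lra. }
  destruct (dense_near u d Hd) as [x [Hx Hux]].
  replace (f u) with (Cadd (f (hsub u x)) (f x)) by (rewrite <- Ha, hsub_add; reflexivity).
  pose proof (Cabs_add (f (hsub u x)) (f x)).
  pose proof (HM (hsub u x)). pose proof (H x Hx).
  pose proof (hnorm_le_sub u x). pose proof (Rle_abs M). pose proof (hnorm_ge0 (hsub u x)).
  assert (M * hnorm A (hsub u x) <= Rabs M * d).
  { apply Rle_trans with (Rabs M * hnorm A (hsub u x)). apply Rmult_le_compat_r; lra.
    apply Rmult_le_compat_l. apply Rabs_pos. lra. }
  assert (K * hnorm A x <= K * hnorm A u + K * d).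
  { rewrite <- Rmult_plus_distr_l. apply Rmult_le_compat_l; lra. }
  assert (e = Rabs M * d + K * d + d). { unfold d. field. pose proof (Rabs_pos M); lra. }
  lra.
Qed.

Lemma ext_zero {A : HilbertQuasiStarAlgebra} (f : A -> Cplx) :
  AddC f -> BddC f -> (forall x, A0 A x -> f x = C0) -> forall u, f u = C0.
Proof.
  intros Ha Hb H u. apply Cabs_eq0. pose proof (Cabs_ge0 (f u)).
  pose proof (ext_le f 0 Ha Hb (Rle_refl 0)) as E.
  assert (Cabs (f u) <= 0 * hnorm A u). apply E. intros x Hx. rewrite H; auto.
  unfold Cabs; simpl. rewrite Rmult_0_l, Rplus_0_l, Rmult_0_l, sqrt_0. lra. lra.
Qed.

Lemma ext_eq {A : HilbertQuasiStarAlgebra} (f g : A -> Cplx) :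
  AddC f -> BddC f -> AddC g -> BddC g -> (forall x, A0 A x -> f x = g x) ->
  forall u, f u = g u.
Proof.
  intros Af [M1 B1] Ag [M2 B2] H u.
  assert (E : Cadd (f u) (Copp (g u)) = C0).
  { apply (ext_zero (fun u => Cadd (f u) (Copp (g u)))).
    - intros a b. rewrite Af, Ag. cring.
    - exists (M1 + M2). intro v. eapply Rle_trans. apply Cabs_add.
      rewrite Cabs_opp. pose proof (B1 v); pose proof (B2 v). lra.
    - intros x Hx. rewrite H; auto. cring. }
  pose proof (f_equal Re E) as E1; pose proof (f_equal Im E) as E2.
  apply Cext; csimpl; lra.
Qed.

Lemma Bddv_pos {A : HilbertQuasiStarAlgebra} (f : A -> A) :
  Bddv f -> exists M, 0 <= M /\ forall u, hnorm A (f u) <= M * hnorm A u.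
Proof.
  intros [M HM]. exists (Rabs M). split. apply Rabs_pos. intro u.
  eapply Rle_trans. apply HM. apply Rmult_le_compat_r. apply hnorm_ge0. apply Rle_abs.
Qed.

Lemma Addv_id {A : HilbertQuasiStarAlgebra} : Addv (fun u : A => u).
Proof. intros u v. reflexivity. Qed.
Lemma Bddv_id {A : HilbertQuasiStarAlgebra} : Bddv (fun u : A => u).
Proof. exists 1. intro. lra. Qed.

Lemma Addv_comp {A : HilbertQuasiStarAlgebra} (f g : A -> A) :
  Addv f -> Addv g -> Addv (fun u => f (g u)).
Proof. intros Hf Hg u v. rewrite Hg, Hf. reflexivity. Qed.

Lemma Bddv_comp {A : HilbertQuasiStarAlgebra} (f g : A -> A) :
  Bddv f -> Bddv g -> Bddv (fun u => f (g u)).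
Proof.
  intros Hf Hg. destruct (Bddv_pos f Hf) as [M1 [P1 B1]]. destruct (Bddv_pos g Hg) as [M2 [P2 B2]].
  exists (M1 * M2). intro u. eapply Rle_trans. apply B1. rewrite Rmult_assoc.
  apply Rmult_le_compat_l; auto.
Qed.

Lemma AddC_inner_l {A : HilbertQuasiStarAlgebra} (f : A -> A) z :
  Addv f -> AddC (fun u => << f u, z >>).
Proof. intros Hf u v. simpl. rewrite Hf, inner_addl. reflexivity. Qed.

Lemma AddC_inner_r {A : HilbertQuasiStarAlgebra} (f : A -> A) z :
  Addv f -> AddC (fun u => << z, f u >>).
Proof. intros Hf u v. simpl. rewrite Hf, inner_addr. reflexivity. Qed.

Lemma BddC_inner_l {A : HilbertQuasiStarAlgebra} (f : A -> A) z :
  Bddv f -> BddC (fun u => << f u, z >>).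
Proof.
  intros Hf. destruct (Bddv_pos f Hf) as [M [P B]]. exists (M * hnorm A z). intro u.
  eapply Rle_trans. apply CS. pose proof (hnorm_ge0 z). pose proof (B u).
  replace (M * hnorm A z * hnorm A u) with (M * hnorm A u * hnorm A z) by ring.
  apply Rmult_le_compat_r; auto.
Qed.

Lemma BddC_inner_r {A : HilbertQuasiStarAlgebra} (f : A -> A) z :
  Bddv f -> BddC (fun u => << z, f u >>).
Proof.
  intros Hf. destruct (Bddv_pos f Hf) as [M [P B]]. exists (M * hnorm A z). intro u.
  eapply Rle_trans. apply CS. pose proof (hnorm_ge0 z). pose proof (B u).
  replace (M * hnorm A z * hnorm A u) with (hnorm A z * (M * hnorm A u)) by ring.
  apply Rmult_le_compat_l; auto.
Qed.

Lemma vext_eq {A : HilbertQuasiStarAlgebra} (f g : A -> A) :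
  Addv f -> Bddv f -> Addv g -> Bddv g -> (forall x, A0 A x -> f x = g x) ->
  forall u, f u = g u.
Proof.
  intros Af Bf Ag Bg H u. apply inner_ext. intro z.
  apply (ext_eq (fun u => << f u, z >>) (fun u => << g u, z >>));
    auto using AddC_inner_l, BddC_inner_l.
  intros x Hx. rewrite H; auto.
Qed.

Lemma Addv_star {A : HilbertQuasiStarAlgebra} : Addv (star A).
Proof. intros u v. apply star_add. Qed.
Lemma Bddv_star {A : HilbertQuasiStarAlgebra} : Bddv (star A).
Proof. exists 1. intro u. rewrite hnorm_star. lra. Qed.

Lemma Addv_mulr {A : HilbertQuasiStarAlgebra} (x : A) : A0 A x -> Addv (fun u => x @ u).
Proof. intros Hx u v. apply mul_addr; auto. Qed.
Lemma Addv_mull {A : HilbertQuasiStarAlgebra} (x : A) : A0 A x -> Addv (fun u => u @ x).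
Proof. intros Hx u v. apply mul_addl; auto. Qed.

Lemma Bddv_mulr {A : HilbertQuasiStarAlgebra} (x : A) : A0 A x -> Bddv (fun u => x @ u).
Proof.
  intros Hx. destruct (mul_contr A x Hx) as [M HM]. exists (sqrt (Rabs M)). intro u.
  unfold hnorm. rewrite <- sqrt_mult by (apply Rabs_pos || apply N_ge0).
  apply sqrt_le_1_alt. eapply Rle_trans. apply HM. apply Rmult_le_compat_r. apply N_ge0. apply Rle_abs.
Qed.
Lemma Bddv_mull {A : HilbertQuasiStarAlgebra} (x : A) : A0 A x -> Bddv (fun u => u @ x).
Proof.
  intros Hx. destruct (mul_contl A x Hx) as [M HM]. exists (sqrt (Rabs M)). intro u.
  unfold hnorm. rewrite <- sqrt_mult by (apply Rabs_pos || apply N_ge0).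
  apply sqrt_le_1_alt. eapply Rle_trans. apply HM. apply Rmult_le_compat_r. apply N_ge0. apply Rle_abs.
Qed.

Ltac ad := first [ apply Addv_id | apply Addv_star | apply Addv_mulr; auto using A0_star
                 | apply Addv_mull; auto using A0_star | apply Addv_comp; ad ].
Ltac bd := first [ apply Bddv_id | apply Bddv_star | apply Bddv_mulr; auto using A0_star
                 | apply Bddv_mull; auto using A0_star | apply Bddv_comp; bd ].

Lemma E4 {A : HilbertQuasiStarAlgebra} (u v : A) : << u, v >> = << v^*, u^* >>.
Proof.
  assert (H1 : forall y, A0 A y -> forall u, << u, y >> = << y^*, u^* >>).
  { intros y Hy. apply (ext_eq (fun u => << u, y >>) (fun u => << y^*, u^* >>)).
    apply (AddC_inner_l (fun u => u)); ad. apply (BddC_inner_l (fun u => u)); bd.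
    apply (AddC_inner_r (star A)); ad. apply (BddC_inner_r (star A)); bd.
    intros x Hx. apply hilb_iii; auto. }
  revert v. apply (ext_eq (fun v => << u, v >>) (fun v => << v^*, u^* >>)).
  apply (AddC_inner_r (fun u => u)); ad. apply (BddC_inner_r (fun u => u)); bd.
  apply (AddC_inner_l (star A)); ad. apply (BddC_inner_l (star A)); bd.
  intros y Hy. apply H1; auto.
Qed.

Lemma E1 {A : HilbertQuasiStarAlgebra} (x xi z : A) : A0 A x ->
  << x @ xi, z >> = << xi, x^* @ z >>.
Proof.
  intro Hx.
  assert (H1 : forall y, A0 A y -> forall z, << x @ y, z >> = << y, x^* @ z >>).
  { intros y Hy. apply (ext_eq (fun z => << x @ y, z >>) (fun z => << y, x^* @ z >>)).
    apply (AddC_inner_r (fun u => u)); ad. apply (BddC_inner_r (fun u => u)); bd.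
    apply (AddC_inner_r (fun u => x^* @ u)); ad. apply (BddC_inner_r (fun u => x^* @ u)); bd.
    intros z' Hz. apply hilb_ii; auto. }
  revert xi. apply (ext_eq (fun xi => << x @ xi, z >>) (fun xi => << xi, x^* @ z >>)).
  apply (AddC_inner_l (fun u => x @ u)); ad. apply (BddC_inner_l (fun u => x @ u)); bd.
  apply (AddC_inner_l (fun u => u)); ad. apply (BddC_inner_l (fun u => u)); bd.
  intros y Hy. apply H1; auto.
Qed.

Lemma E3 {A : HilbertQuasiStarAlgebra} (xi x : A) : A0 A x ->
  (xi @ x)^* = x^* @ xi^*.
Proof.
  intro Hx. revert xi.
  apply (vext_eq (fun xi => (xi @ x)^*) (fun xi => x^* @ xi^*)).
  apply (Addv_comp (star A) (fun u => u @ x)); ad. apply (Bddv_comp (star A) (fun u => u @ x)); bd.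
  apply (Addv_comp (fun u => x^* @ u) (star A)); ad. apply (Bddv_comp (fun u => x^* @ u) (star A)); bd.
  intros a Ha. apply star_mul; auto.
Qed.

Lemma E3' {A : HilbertQuasiStarAlgebra} (x xi : A) : A0 A x ->
  (x @ xi)^* = xi^* @ x^*.
Proof.
  intro Hx. pose proof (E3 (xi^*) (x^*) (A0_star A x Hx)) as E.
  rewrite !star_invol in E. rewrite <- E, star_invol. reflexivity.
Qed.

Lemma E2_A0 {A : HilbertQuasiStarAlgebra} (a x y : A) : A0 A a -> A0 A x -> A0 A y ->
  << a @ x, y >> = << a, y @ x^* >>.
Proof.
  intros Ha Hx Hy.
  rewrite hilb_iii by auto using A0_mul. rewrite star_mul by auto.
  rewrite inner_conj. rewrite hilb_ii by auto using A0_star. rewrite star_invol.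
  rewrite <- inner_conj. rewrite hilb_iii by auto using A0_star, A0_mul.
  rewrite star_invol, star_mul, star_invol by auto using A0_star. reflexivity.
Qed.

Lemma E2 {A : HilbertQuasiStarAlgebra} (xi x z : A) : A0 A x ->
  << xi @ x, z >> = << xi, z @ x^* >>.
Proof.
  intro Hx.
  assert (H1 : forall a, A0 A a -> forall z, << a @ x, z >> = << a, z @ x^* >>).
  { intros a Ha. apply (ext_eq (fun z => << a @ x, z >>) (fun z => << a, z @ x^* >>)).
    apply (AddC_inner_r (fun u => u)); ad. apply (BddC_inner_r (fun u => u)); bd.
    apply (AddC_inner_r (fun u => u @ x^*)); ad. apply (BddC_inner_r (fun u => u @ x^*)); bd.
    intros y Hy. apply E2_A0; auto. }
  revert xi. apply (ext_eq (fun xi => << xi @ x, z >>) (fun xi => << xi, z @ x^* >>)).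
  apply (AddC_inner_l (fun u => u @ x)); ad. apply (BddC_inner_l (fun u => u @ x)); bd.
  apply (AddC_inner_l (fun u => u)); ad. apply (BddC_inner_l (fun u => u)); bd.
  intros a Ha. apply H1; auto.
Qed.

Lemma E5 {A : HilbertQuasiStarAlgebra} (y xi z : A) : A0 A y -> A0 A z ->
  y @ (xi @ z) = (y @ xi) @ z.
Proof.
  intros Hy Hz. revert xi.
  apply (vext_eq (fun xi => y @ (xi @ z)) (fun xi => (y @ xi) @ z)).
  apply (Addv_comp (fun u => y @ u) (fun u => u @ z)); ad.
  apply (Bddv_comp (fun u => y @ u) (fun u => u @ z)); bd.
  apply (Addv_comp (fun u => u @ z) (fun u => y @ u)); ad.
  apply (Bddv_comp (fun u => u @ z) (fun u => y @ u)); bd.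
  intros x Hx. apply mul_assoc; auto.
Qed.

Lemma quad_zero a b : 0 <= a -> (forall t, 0 <= t * t * a + t * b) -> b = 0.
Proof.
  intros Ha H. destruct (Req_dec b 0) as [|Hb]; auto. exfalso.
  specialize (H (- b / (a + 1))).
  assert (E : - b / (a + 1) * (- b / (a + 1)) * a + - b / (a + 1) * b = - (b * b) / ((a + 1) * (a + 1))).
  { field. lra. }
  rewrite E in H.
  assert (0 < b * b) by (destruct (Rlt_le_dec b 0); nra).
  assert (0 < (a + 1) * (a + 1)) by nra.
  assert (0 < b * b / ((a + 1) * (a + 1))) by (apply Rdiv_lt_0_compat; auto).
  unfold Rdiv in *. lra.
Qed.

Lemma nat_above x : exists n : nat, x < INR n + 1.
Proof.
  destruct (archimed x) as [H _]. exists (Z.to_nat (up x)).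
  destruct (Z_le_gt_dec 0 (up x)).
  - rewrite INR_IZR_INZ, Z2Nat.id by auto. lra.
  - assert (IZR (up x) <= 0). { apply IZR_le. lia. }
    pose proof (pos_INR (Z.to_nat (up x))). lra.
Qed.

Definition Ffun {A : HilbertQuasiStarAlgebra} (w : A -> Cplx) (u : A) : R :=
  Nm u / 2 - Re (w u).

Lemma lf_add {A : HilbertQuasiStarAlgebra} (w : A -> Cplx) : linear_functional A w ->
  forall u v, w (u +h v) = Cadd (w u) (w v).
Proof. intros [H _]; auto. Qed.
Lemma lf_scal {A : HilbertQuasiStarAlgebra} (w : A -> Cplx) : linear_functional A w ->
  forall a u, w (a *h u) = Cmul a (w u).
Proof. intros [_ H]; auto. Qed.

Lemma N_hsub {A : HilbertQuasiStarAlgebra} (u v : A) :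
  Nm (hsub u v) = Nm u + Nm v - 2 * Re << u, v >>.
Proof. rewrite hsub_scal, N_add, N_scal, inner_scalr. csimpl. ring. Qed.

Lemma w_hsub {A : HilbertQuasiStarAlgebra} (w : A -> Cplx) : linear_functional A w ->
  forall u v, Re (w (hsub u v)) = Re (w u) - Re (w v).
Proof. intros hw u v. rewrite hsub_scal, (lf_add w hw), (lf_scal w hw) by auto. csimpl. ring. Qed.

Lemma F_para {A : HilbertQuasiStarAlgebra} (w : A -> Cplx) : linear_functional A w ->
  forall u v, Nm (hsub u v) / 4 = Ffun w u + Ffun w v - 2 * Ffun w (mkC (1/2) 0 *h (u +h v)).
Proof.
  intros hw u v. unfold Ffun. rewrite N_hsub, N_scal, N_add, (lf_scal w hw), (lf_add w hw) by auto.
  csimpl. field.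
Qed.

Lemma F_cont {A : HilbertQuasiStarAlgebra} (w : A -> Cplx) M : linear_functional A w ->
  (forall u, Cabs (w u) <= M * hnorm A u) ->
  forall l d, Ffun w l <= Ffun w (hsub l d) + (hnorm A l + M) * hnorm A d.
Proof.
  intros hw HM l d. unfold Ffun. rewrite N_hsub, w_hsub by auto.
  pose proof (CS l d). pose proof (Re_le_Cabs' << l, d >>).
  pose proof (HM d). pose proof (Re_le_Cabs (w d)). pose proof (Rle_abs (- Re (w d))).
  rewrite Rabs_Ropp in *. pose proof (N_ge0 d). nra.
Qed.

Lemma F_var {A : HilbertQuasiStarAlgebra} (w : A -> Cplx) : linear_functional A w ->
  forall l v t, Ffun w (l +h mkC t 0 *h v) =
    Ffun w l + t * t * (Nm v / 2) + t * (Re << l, v >> - Re (w v)).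
Proof.
  intros hw l v t. unfold Ffun. rewrite N_add, N_scal, (lf_add w hw), (lf_scal w hw), inner_scalr by auto.
  csimpl. field.
Qed.

Lemma riesz {A : HilbertQuasiStarAlgebra} (w : A -> Cplx) :
  linear_functional A w -> norm_continuous A w ->
  exists eta, forall xi, w xi = << xi, eta >>.
Proof.
  intros hw [M HM].
  set (F := Ffun w).
  assert (Flow : forall u, - (M * M) / 2 <= F u).
  { intro u. unfold F, Ffun. pose proof (HM u). pose proof (Re_le_Cabs' (w u)).
    rewrite <- hnorm_sq. pose proof (Rle_0_sqr (hnorm A u - M)). unfold Rsqr in *. nra. }
  set (E := fun r => exists u, r = - F u).
  destruct (completeness E) as [S [HS1 HS2]].
  { exists (M * M / 2). intros r [u ->]. pose proof (Flow u). lra. }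
  { exists (- F 0h). exists 0h. reflexivity. }
  set (m := - S).
  assert (Hm1 : forall u, m <= F u).
  { intro u. assert (- F u <= S) by (apply HS1; exists u; reflexivity). unfold m; lra. }
  assert (Hm2 : forall e, 0 < e -> exists u, F u < m + e).
  { intros e He. apply NNPP. intro Hn.
    assert (S <= S - e). { apply HS2. intros r [u ->].
      destruct (Rle_lt_dec (- F u) (S - e)); auto. exfalso. apply Hn. exists u. unfold m. lra. }
    lra. }
  assert (Hs : forall n : nat, exists u, F u < m + / (INR n + 1)).
  { intro n. apply Hm2. apply Rinv_0_lt_compat. pose proof (pos_INR n). lra. }
  set (s := fun n => proj1_sig (constructive_indefinite_description _ (Hs n))).
  assert (Hsn : forall n, F (s n) < m + / (INR n + 1)).
  { intro n. unfold s. destruct (constructive_indefinite_description _ (Hs n)). auto. }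
  assert (Hcau : forall n k, Nm (hsub (s n) (s k)) <= 4 * (/ (INR n + 1) + / (INR k + 1))).
  { intros n k. pose proof (F_para w hw (s n) (s k)). fold F in H.
    pose proof (Hsn n). pose proof (Hsn k). pose proof (Hm1 (mkC (1 / 2) 0 *h (s n +h s k))). lra. }
  destruct (complete A s) as [l Hl].
  { intros e He.
    destruct (nat_above (8 / (e * e))) as [N0 HN0].
    exists N0. intros n k Hn Hk.
    change (hnorm A (hsub (s n) (s k)) < e).
    assert (Hinv : forall j, (N0 <= j)%nat -> / (INR j + 1) <= / (INR N0 + 1)).
    { intros j Hj. apply Rinv_le_contravar. pose proof (pos_INR N0); lra.
      apply le_INR in Hj. lra. }
    assert (He2 : 8 / (INR N0 + 1) < e * e).
    { assert (0 < e * e) by nra. pose proof (pos_INR N0).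
      apply (Rmult_lt_compat_r (e * e / (INR N0 + 1))) in HN0.
      replace (8 / (e * e) * (e * e / (INR N0 + 1))) with (8 / (INR N0 + 1)) in HN0 by (field; lra).
      replace ((INR N0 + 1) * (e * e / (INR N0 + 1))) with (e * e) in HN0 by (field; lra). auto.
      apply Rdiv_lt_0_compat; lra. }
    pose proof (Hcau n k). pose proof (Hinv n Hn). pose proof (Hinv k Hk).
    assert (Nm (hsub (s n) (s k)) < e * e). { unfold Rdiv in He2. lra. }
    pose proof (hnorm_sq (hsub (s n) (s k))). pose proof (hnorm_ge0 (hsub (s n) (s k))). nra. }
  assert (Hlim : forall e, 0 < e -> exists N0, forall n, (N0 <= n)%nat -> hnorm A (hsub l (s n)) < e).
  { intros e He. destruct (Hl e He) as [N0 HN]. exists N0. intros n Hn. rewrite hsub_sym. apply HN; auto. }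
  assert (Fl : forall z, F l <= F z).
  { intro z. apply eps_le. intros e He.
    assert (HK : 0 < hnorm A l + Rabs M + 1) by (pose proof (hnorm_ge0 l); pose proof (Rabs_pos M); lra).
    destruct (Hlim (e / 2 / (hnorm A l + Rabs M + 1))) as [N1 HN1].
    { apply Rdiv_lt_0_compat; lra. }
    destruct (nat_above (2 / e)) as [N2 HN2].
    set (n := (N1 + N2)%nat).
    pose proof (HN1 n ltac:(unfold n; lia)) as H1.
    pose proof (F_cont w M hw HM l (hsub l (s n))) as H2.
    replace (hsub l (hsub l (s n))) with (s n) in H2 by veq.
    fold F in H2. pose proof (Hsn n) as H3. pose proof (Hm1 z) as H4.
    assert (H5 : / (INR n + 1) < e / 2).
    { assert (INR N2 <= INR n) by (apply le_INR; unfold n; lia).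
      assert (0 < 2 / e) by (apply Rdiv_lt_0_compat; lra).
      replace (e / 2) with (/ (2 / e)) by (field; lra).
      apply Rinv_lt_contravar. apply Rmult_lt_0_compat; lra. lra. }
    assert (H6 : (hnorm A l + M) * hnorm A (hsub l (s n)) <= e / 2).
    { pose proof (hnorm_ge0 (hsub l (s n))). pose proof (Rle_abs M). pose proof (hnorm_ge0 l).
      apply Rle_trans with ((hnorm A l + Rabs M + 1) * hnorm A (hsub l (s n))).
      apply Rmult_le_compat_r; lra.
      apply Rlt_le in H1.
      apply (Rmult_le_compat_l (hnorm A l + Rabs M + 1)) in H1; [|lra].
      replace ((hnorm A l + Rabs M + 1) * (e / 2 / (hnorm A l + Rabs M + 1))) with (e / 2) in H1
        by (field; lra). auto. }
    lra. }
  exists l.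
  assert (HRe : forall v, Re (w v) = Re << v, l >>).
  { intro v. pose proof (quad_zero (Nm v / 2) (Re << l, v >> - Re (w v))) as Q.
    rewrite (inner_Re_sym l v) in Q.
    assert (Re << v, l >> - Re (w v) = 0).
    { apply Q. pose proof (N_ge0 v); lra.
      intro t. pose proof (Fl (l +h mkC t 0 *h v)). unfold F in H. rewrite F_var in H by auto.
      rewrite (inner_Re_sym l v) in H. fold F in H. lra. }
    lra. }
  intro xi. apply Cext. apply HRe.
  pose proof (HRe (mkC 0 1 *h xi)). rewrite (lf_scal w hw), inner_scall in H.
  csimpl. lra.
Qed.

Definition rr (k : nat) : R := (/ 4) ^ k.
Lemma rr_pos k : 0 < rr k.
Proof. unfold rr. apply pow_lt. lra. Qed.
Lemma rr_S k : rr (S k) = rr k / 4.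
Proof. unfold rr. simpl. field. Qed.

Fixpoint cseq {A : HilbertQuasiStarAlgebra} (g : nat -> A) (nn : nat -> R) (k : nat) : A :=
  match k with
  | O => 0h
  | S k => cseq g nn k +h
      mkC ((if Rle_dec 0 (Re << cseq g nn k, g k >>) then 1 else -1) * rr k / 2) 0 *h
        (mkC (/ nn k) 0 *h g k)
  end.

Lemma ubp {A : HilbertQuasiStarAlgebra} (P : A -> Prop) (f : A -> A) (s : A -> R) :
  (forall i, 0 <= s i) ->
  (forall z, exists g, forall i, P i -> Cabs << z, f i >> <= g * s i) ->
  exists C, forall i, P i -> hnorm A (f i) <= C * s i.
Proof.
  intros Hs Hyp. apply NNPP. intro Hn.
  assert (Hex : forall C, exists i, P i /\ C * s i < hnorm A (f i)).
  { intro C. apply NNPP. intro H1. apply Hn. exists C. intros i Hi.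
    destruct (Rle_lt_dec (hnorm A (f i)) (C * s i)); auto. exfalso. apply H1. exists i; auto. }
  set (pick := fun C => proj1_sig (constructive_indefinite_description _ (Hex C))).
  assert (Hpick : forall C, P (pick C) /\ C * s (pick C) < hnorm A (f (pick C))).
  { intro C. unfold pick. destruct (constructive_indefinite_description _ (Hex C)). auto. }
  set (K := fun k : nat => 4 * (INR k + 1) / rr k).
  set (g := fun k => f (pick (K k))).
  set (nn := fun k => hnorm A (g k)).
  set (sk := fun k => s (pick (K k))).
  assert (Hgk : forall k, K k * sk k < nn k) by (intro k; apply Hpick).
  assert (HK : forall k, rr k * K k = 4 * (INR k + 1)).
  { intro k. unfold K. field. pose proof (rr_pos k). lra. }
  assert (Hnn : forall k, 0 < nn k).
  { intro k. pose proof (Hgk k). pose proof (Hs (pick (K k))). fold (sk k) in H0.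
    assert (0 <= K k). { unfold K. apply Rmult_le_pos. pose proof (pos_INR k). lra.
      apply Rlt_le, Rinv_0_lt_compat, rr_pos. }
    nra. }
  set (c := cseq g nn).
  assert (Hstep : forall k, hnorm A (hsub (c (S k)) (c k)) = rr k / 2).
  { intro k. unfold c; cbn [cseq]; fold c.
    match goal with |- hnorm A (hsub (?x +h ?y) _) = _ => replace (hsub (x +h y) x) with y by veq end.
    rewrite !hnorm_scal, !Cabs_RtoC. fold (nn k).
    rewrite Rabs_inv, (Rabs_right (nn k)) by (pose proof (Hnn k); lra).
    pose proof (rr_pos k). pose proof (Hnn k).
    destruct (Rle_dec 0 (Re << c k, g k >>)).
    - rewrite Rabs_right by lra. field. lra.
    - rewrite Rabs_left by lra. field. lra. }
  assert (Hsum : forall m j, hnorm A (hsub (c (m + j)%nat) (c m)) <= 2 / 3 * (rr m - rr (m + j)%nat)).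
  { intros m j. induction j.
    - rewrite Nat.add_0_r. replace (hsub (c m) (c m)) with (0h : A) by veq. rewrite hnorm_0. lra.
    - rewrite Nat.add_succ_r. eapply Rle_trans. apply (hsub_tri _ (c (m + j)%nat)).
      rewrite Hstep, rr_S. lra. }
  assert (Hsum' : forall m n, (m <= n)%nat -> hnorm A (hsub (c n) (c m)) <= 2 / 3 * rr m).
  { intros m n Hmn. replace n with (m + (n - m))%nat by lia. eapply Rle_trans. apply Hsum.
    pose proof (rr_pos (m + (n - m))). lra. }
  destruct (complete A c) as [z Hz].
  { intros e He. destruct (pow_lt_1_zero (/ 4) ltac:(rewrite Rabs_right; lra) (e / 2) ltac:(lra)) as [N0 HN0].
    exists N0. intros n m Hn1 Hm. change (hnorm A (hsub (c n) (c m)) < e).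
    eapply Rle_lt_trans. apply (hsub_tri _ (c N0)). rewrite (hsub_sym (c N0) (c m)).
    pose proof (Hsum' N0 n Hn1). pose proof (Hsum' N0 m Hm).
    pose proof (HN0 N0 (le_n _)). rewrite Rabs_right in H1 by (apply Rle_ge, Rlt_le, rr_pos).
    fold (rr N0) in H1. lra. }
  assert (Hzc : forall m, hnorm A (hsub z (c m)) <= 2 / 3 * rr m).
  { intro m. apply eps_le. intros e He. destruct (Hz e He) as [N0 HN0].
    pose proof (HN0 (N0 + m)%nat ltac:(lia)) as H1. change (hnorm A (hsub (c (N0 + m)%nat) z) < e) in H1.
    rewrite hsub_sym in H1. pose proof (Hsum' m (N0 + m)%nat ltac:(lia)).
    pose proof (hsub_tri z (c (N0 + m)%nat) (c m)). lra. }
  assert (Hlow : forall k, rr k * nn k / 3 <= Cabs << z, g k >>).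
  { intro k.
    assert (E1 : Re << c (S k), g k >> =
       Re << c k, g k >> + (if Rle_dec 0 (Re << c k, g k >>) then 1 else -1) * rr k / 2 * nn k).
    { unfold c; cbn [cseq]; fold c. rewrite inner_addl, !inner_scall. csimpl.
      rewrite (inner_Im (g k)). rewrite <- (hnorm_sq (g k)). fold (nn k). field.
      pose proof (Hnn k); lra. }
    assert (E2 : rr k * nn k / 2 <= Rabs (Re << c (S k), g k >>)).
    { rewrite E1. pose proof (rr_pos k). pose proof (Hnn k).
      destruct (Rle_dec 0 (Re << c k, g k >>)).
      - rewrite Rabs_right. nra. nra.
      - rewrite Rabs_left. nra. nra. }
    assert (E3 : << z, g k >> = Cadd << hsub z (c (S k)), g k >> << c (S k), g k >>).
    { rewrite <- inner_addl. f_equal. veq. }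
    assert (E4 : Cabs << hsub z (c (S k)), g k >> <= rr k * nn k / 6).
    { eapply Rle_trans. apply CS. fold (nn k). pose proof (Hzc (S k)). rewrite rr_S in H.
      pose proof (Hnn k). apply Rle_trans with (2 / 3 * (rr k / 4) * nn k). apply Rmult_le_compat_r; lra.
      lra. }
    pose proof (Re_le_Cabs << hsub z (c (S k)), g k >>).
    pose proof (Re_le_Cabs << z, g k >>).
    rewrite E3 in H0. simpl in H0.
    pose proof (Rabs_triang_inv (Re << c (S k), g k >>) (- Re << hsub z (c (S k)), g k >>)).
    rewrite Rabs_Ropp in H1.
    replace (Re << c (S k), g k >> - - Re << hsub z (c (S k)), g k >>) with
      (Re << hsub z (c (S k)), g k >> + Re << c (S k), g k >>) in H1 by ring.
    rewrite E3. simpl. lra. }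
  destruct (Hyp z) as [gam Hgam].
  destruct (nat_above gam) as [k Hk].
  pose proof (Hgam (pick (K k)) (proj1 (Hpick (K k)))) as H1. fold (g k) (sk k) in H1.
  pose proof (Hlow k) as H2. pose proof (Hgk k) as H3. pose proof (HK k) as H4.
  pose proof (rr_pos k) as H5. pose proof (Hs (pick (K k))) as H6. fold (sk k) in H6.
  assert (rr k * (K k * sk k) < rr k * nn k) by (apply Rmult_lt_compat_l; auto).
  rewrite <- Rmult_assoc, H4 in H.
  assert (gam * sk k <= (INR k + 1) * sk k) by (apply Rmult_le_compat_r; lra). unfold g, sk in *. assert (0 <= (INR k + 1) * s (pick (K k))) by (apply Rmult_le_pos; [pose proof (pos_INR k); lra | auto]). lra.
Qed.

Lemma herm_form {A : HilbertQuasiStarAlgebra} (eta : A) : w_positive A eta ->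
  forall x y, A0 A x -> A0 A y -> << eta @ x, y >> = Cconj << eta @ y, x >>.
Proof.
  intros Hp x y Hx Hy.
  assert (Hiy : A0 A (mkC 0 1 *h y)) by (apply A0_scal; auto).
  destruct (Hp (x +h y) (A0_add A x y Hx Hy)) as [I1 _].
  destruct (Hp (x +h mkC 0 1 *h y) (A0_add A _ _ Hx Hiy)) as [I2 _].
  destruct (Hp x Hx) as [Ix _]. destruct (Hp y Hy) as [Iy _].
  rewrite mul_addl_A0 in I1 by auto. rewrite mul_addl_A0 in I2 by auto.
  rewrite mul_scall_A0 in I2 by auto.
  rewrite !inner_addl, !inner_addr in I1. rewrite !inner_addl, !inner_addr in I2.
  rewrite !inner_scall, !inner_scalr in I2.
  csimpl. apply Cext; simpl.
  - rewrite Ix, Iy in I2. nra.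
  - lra.
Qed.

Lemma eta_sa {A : HilbertQuasiStarAlgebra} (eta : A) : w_positive A eta -> eta^* = eta.
Proof.
  intro Hp.
  assert (H1 : forall x y, A0 A x -> A0 A y -> << eta @ x, y >> = << eta^* @ x, y >>).
  { intros x y Hx Hy. rewrite (herm_form eta Hp x y Hx Hy), <- inner_conj.
    rewrite (E4 x (eta @ y)), (E3 eta y Hy).
    rewrite (E1 (y^*) (eta^*) (x^*) (A0_star A y Hy)), star_invol.
    rewrite (E2 (eta^*) x y Hx). reflexivity. }
  assert (H2 : forall x, A0 A x -> eta @ x = eta^* @ x).
  { intros x Hx. apply inner_ext.
    apply (ext_eq (fun y => << eta @ x, y >>) (fun y => << eta^* @ x, y >>)).
    apply (AddC_inner_r (fun u => u)); ad. apply (BddC_inner_r (fun u => u)); bd.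
    apply (AddC_inner_r (fun u => u)); ad. apply (BddC_inner_r (fun u => u)); bd.
    intros; apply H1; auto. }
  assert (H3 : hsub eta (eta^*) = 0h).
  { apply cond_A. intros x Hx. unfold hsub. rewrite mul_addl by auto.
    rewrite hopp_scal, mul_scall by auto. rewrite H2 by auto. veq. }
  apply inner_ext. intro z.
  assert (E : << hsub eta (eta^*), z >> = C0) by (rewrite H3; apply inner_0l).
  unfold hsub in E. rewrite hopp_scal, inner_addl, inner_scall in E.
  pose proof (f_equal Re E); pose proof (f_equal Im E). csimpl. apply Cext; simpl; lra.
Qed.

Lemma pos_ineq {A : HilbertQuasiStarAlgebra} (eta : A) M : w_positive A eta -> 0 <= M ->
  (forall x, A0 A x -> hnorm A (eta @ x) <= M * hnorm A x) ->
  forall y, A0 A y -> Nm (eta @ y) <= M * Re << eta @ y, y >>.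
Proof.
  intros Hp HM Hb y Hy.
  set (q := fun v => Re << eta @ v, v >>).
  assert (Hq : forall v, A0 A v -> 0 <= q v) by (intros v Hv; apply (Hp v Hv)).
  assert (Hqv : forall v, A0 A v -> q v <= M * Nm v).
  { intros v Hv. unfold q. pose proof (Re_le_Cabs' << eta @ v, v >>). pose proof (CS (eta @ v) v).
    pose proof (Hb v Hv). pose proof (hnorm_ge0 v). rewrite <- hnorm_sq.
    pose proof (hnorm_ge0 (eta @ v)). nra. }
  set (K := sqrt (q y * M)).
  assert (HK : 0 <= K) by apply sqrt_pos.
  assert (HKK : K * K = q y * M) by (apply sqrt_sqrt; pose proof (Hq y Hy); nra).
  assert (Hcs : forall v, A0 A v -> Cabs << eta @ y, v >> <= K * hnorm A v).
  { intros v Hv. apply Cabs_le_of_sq. pose proof (hnorm_ge0 v); nra.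
    pose proof (CS_gen (fun a b => << eta @ a, b >>) (A0 A)) as C.
    specialize (C (A0_add A) (A0_scal A)).
    assert (C' : Re << eta @ y, v >> * Re << eta @ y, v >> + Im << eta @ y, v >> * Im << eta @ y, v >>
                 <= q y * q v).
    { apply (C (fun u1 v1 w1 H1 H2 H3 => ltac:(cbv beta; rewrite mul_addl_A0, inner_addl by auto; reflexivity))
               (fun a u1 w1 H1 H2 => ltac:(cbv beta; rewrite mul_scall_A0, inner_scall by auto; reflexivity))
               (fun u1 v1 H1 H2 => herm_form eta Hp u1 v1 H1 H2)
               (fun u1 H1 => Hq u1 H1) y v Hy Hv). }
    pose proof (Hqv v Hv). pose proof (Hq y Hy). pose proof (Hq v Hv).
    replace (K * hnorm A v * (K * hnorm A v)) with ((K * K) * (hnorm A v * hnorm A v)) by ring.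
    rewrite HKK, hnorm_sq. nra. }
  assert (Hall : forall v, Cabs << eta @ y, v >> <= K * hnorm A v).
  { apply ext_le; auto.
    apply (AddC_inner_r (fun u => u)); ad. apply (BddC_inner_r (fun u => u)); bd. }
  pose proof (Hall (eta @ y)). pose proof (Re_le_Cabs' << eta @ y, eta @ y >>).
  rewrite <- hnorm_sq in *. pose proof (hnorm_ge0 (eta @ y)).
  assert (hnorm A (eta @ y) <= K) by nra.
  fold (q y). nra.
Qed.

Lemma arith_bd n m t C : 0 <= n -> 0 <= m -> 0 <= t -> t * t <= m * n -> n <= C * t ->
  n <= C * C * m.
Proof.
  intros Hn Hm Ht H1 H2. destruct (Req_dec t 0).
  - subst. assert (n = 0) by lra. subst. nra.
  - assert (0 < t) by lra.
    assert (t * t <= m * (C * t)) by nra.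
    assert (t <= C * m) by nra.
    assert (0 <= C) by nra. nra.
Qed.

Theorem mainTheorem11 (A : HilbertQuasiStarAlgebra) (w : A -> Cplx)
  (hw : linear_functional A w) :
  Rc A w <->
  (exists! eta : A, bounded_elt A eta /\ w_positive A eta /\
     forall xi : A, w xi = inner A xi eta).
Proof.
  split.
  - intros [[L1 [L2 L3]] Hcont].
    destruct (riesz w hw Hcont) as [eta Heta].
    assert (Hwp : w_positive A eta).
    { intros x Hx. rewrite (E2 eta x x Hx).
      destruct (L1 (x^*) (A0_star A x Hx)) as [I R]. rewrite star_invol, Heta in I, R.
      rewrite (inner_conj A eta). csimpl. split; lra. }
    assert (Hb : bounded_elt A eta).
    { destruct (ubp (A0 A) (fun x => eta @ x^*) (fun x => sqrt (Re (w (x^* @ x))))) as [C HC].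
      - intro; apply sqrt_pos.
      - intro z. destruct (L3 (z^*)) as [g [_ Hg]]. exists g. intros x Hx.
        specialize (Hg x Hx). rewrite star_invol, Heta, (E2 z x eta Hx) in Hg. exact Hg.
      - exists (C * C). intros y Hy. specialize (HC (y^*) (A0_star A y Hy)).
        cbv beta in HC. rewrite star_invol in HC.
        destruct (L1 (y^*) (A0_star A y Hy)) as [_ R]. rewrite star_invol in R.
        apply (arith_bd _ _ (sqrt (Re (w (y @ y^*))))); auto using hnorm_ge0, sqrt_pos.
        rewrite sqrt_sqrt by auto.
        rewrite Heta, (E2 y (y^*) eta (A0_star A y Hy)), star_invol.
        eapply Rle_trans. apply Re_le_Cabs'. apply CS. }
    exists eta. split. split; auto.
    intros eta' [_ [_ H']]. apply inner_ext. intro z.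
    rewrite (inner_conj A eta), (inner_conj A eta'), <- Heta, <- H'. reflexivity.
  - intros [eta [[Hb [Hp Hrep]] _]].
    pose proof (eta_sa eta Hp) as Hsa.
    destruct Hb as [M0 HM0].
    set (M := Rabs M0).
    assert (HM : forall x, A0 A x -> hnorm A (eta @ x) <= M * hnorm A x).
    { intros x Hx. eapply Rle_trans. apply HM0; auto. apply Rmult_le_compat_r. apply hnorm_ge0. apply Rle_abs. }
    assert (HMp : 0 <= M) by apply Rabs_pos.
    split; [split; [|split]|].
    + intros x Hx. rewrite Hrep, (E2 (x^*) x eta Hx), (inner_conj A (x^*)).
      destruct (Hp (x^*) (A0_star A x Hx)) as [I R]. csimpl. split; lra.
    + intros x y xi Hx Hy. rewrite !Hrep.
      rewrite (E1 (y^*) (xi^* @ x) eta (A0_star A y Hy)), star_invol.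
      rewrite (E2 (xi^*) x (y @ eta) Hx).
      rewrite (E1 (x^*) (xi @ y) eta (A0_star A x Hx)), star_invol.
      rewrite <- inner_conj, (E4 (x @ eta) (xi @ y)).
      rewrite (E3 xi y Hy), (E3' x eta Hx).
      rewrite (E1 (y^*) (xi^*) (eta^* @ x^*) (A0_star A y Hy)), star_invol.
      rewrite Hsa, (E5 y eta (x^*) Hy (A0_star A x Hx)). reflexivity.
    + intro xi. exists (hnorm A xi * sqrt M + 1). split.
      { pose proof (hnorm_ge0 xi). pose proof (sqrt_pos M). nra. }
      intros x Hx. rewrite !Hrep, (E2 (xi^*) x eta Hx), (E2 (x^*) x eta Hx).
      set (y := x^*). assert (Hy : A0 A y) by (apply A0_star; auto).
      pose proof (pos_ineq eta M Hp HMp HM y Hy) as P.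
      set (q := Re << eta @ y, y >>) in P.
      assert (Hq : 0 <= q) by apply (Hp y Hy).
      assert (Eq : Re << y, eta @ y >> = q) by (unfold q; apply inner_Re_sym).
      rewrite Eq.
      assert (Hn : hnorm A (eta @ y) <= sqrt M * sqrt q).
      { rewrite <- sqrt_mult by auto. apply sqrt_le_1_alt. exact P. }
      eapply Rle_trans. apply CS. rewrite hnorm_star.
      pose proof (hnorm_ge0 xi). pose proof (sqrt_pos q). pose proof (sqrt_pos M).
      apply Rle_trans with (hnorm A xi * (sqrt M * sqrt q)).
      apply Rmult_le_compat_l; auto. nra.
    + exists (hnorm A eta). intro u. rewrite Hrep. eapply Rle_trans. apply CS. lra.
Qed.
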